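(* Consider the one-hidden-layer ReLU network setting below, trained by gradient descent with Polyak's momentum with step size $\eta>0$ and momentum parameter $\beta\in[0,1]$. Fix $R>0$ and $t\ge0$, and assume $\|w^{(r)}_s-w^{(r)}_0\|\le R$ for all $r\in[m]$ and all $s\in\{0,1,\dots,t+1\}$. Let $\xi_s:=u_s-y\in\mathbb{R}^n$ and define $$\iota_t:=\eta(H_0-H_t)\xi_t,\qquad \phi_t:=\xi_{t+1}-(1+\beta)\xi_t+\beta\xi_{t-1}+\eta H_t\xi_t,$$ so that $\begin{bmatrix}\xi_{t+1}\\ \xi_t\end{bmatrix}=\begin{bmatrix}(1+\beta)I_n-\eta H_0&-\beta I_n\\ I_n&0\end{bmatrix}\begin{bmatrix}\xi_t\\ \xi_{t-1}\end{bmatrix}+\begin{bmatrix}\phi_t+\iota_t\\0\end{bmatrix}$. Then for every $i\in[n]$, $$|\phi_t[i]|\le\frac{2\eta\sqrt n\,|S_i^\perp|}{m}\Big(\|u_t-y\|+\beta\sum_{s=0}^{t-1}\beta^{t-1-s}\|u_s-y\|\Big).$$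
   Context: Data $x_1,\dots,x_n\in\mathbb{R}^d$ with $\|x_i\|\le1$, labels $y\in\mathbb{R}^n$. Network $\mathcal N_W(x)=\frac{1}{\sqrt m}\sum_{r=1}^m a_r\sigma(\langle w^{(r)},x\rangle)$ with $\sigma(z)=z\mathbb{1}\{z\ge0\}$, fixed $a_r\in\{-1,1\}$, trainable $W=\{w^{(r)}\}_{r=1}^m\subset\mathbb{R}^d$. Loss $\ell(W)=\frac12\sum_i(y_i-\mathcal N_W(x_i))^2$, subgradient $\frac{\partial\ell(W)}{\partial w^{(r)}}:=\frac1{\sqrt m}\sum_{i=1}^n(\mathcal N_W(x_i)-y_i)a_r\mathbb{1}\{\langle w^{(r)},x_i\rangle\ge0\}x_i$. Gradient descent with Polyak's momentum: $w^{(r)}_{-1}:=w^{(r)}_0$, $w^{(r)}_{t+1}=w^{(r)}_t-\eta\frac{\partial\ell(W_t)}{\partial w^{(r)}_t}+\beta(w^{(r)}_t-w^{(r)}_{t-1})$. $u_t\in\mathbb{R}^n$ has entries $u_t[i]=\mathcal N_{W_t}(x_i)$. $H_t\in\mathbb{R}^{n\times n}$ has entries $(H_t)_{ij}=\frac1m\sum_{r=1}^m x_i^\top x_j\mathbb{1}\{\langle w^{(r)}_t,x_i\rangle\ge0\ \&\ \langle w^{(r)}_t,x_j\rangle\ge0\}$. For $i\in[n]$, $r\in[m]$, $A_{ir}$ is the event that there exists $w$ with $\|w-w^{(r)}_0\|\le R$ and $\mathbb{1}\{x_i^\top w^{(r)}_0\ge0\}\ne\mathbb{1}\{x_i^\top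 w\ge0\}$; $S_i:=\{r\in[m]:A_{ir}\text{ does not hold}\}$ and $S_i^\perp:=[m]\setminus S_i$. *)

(* Defs.v *)
From HB Require Import structures.
From mathcomp Require Import all_boot all_order all_algebra.
From mathcomp Require Import boolp reals.
Set Implicit Arguments. Unset Strict Implicit. Unset Printing Implicit Defensive.
Import Order.TTheory GRing.Theory Num.Theory.
Local Open Scope ring_scope.

Section Defs.
Variable R : realType.

Definition dotv (d : nat) (u v : 'rV[R]_d) : R := \sum_(k < d) u 0 k * v 0 k.
Definition normv (d : nat) (u : 'rV[R]_d) : R := Num.sqrt (dotv u u).

Definition normf (n : nat) (v : 'I_n -> R) : R := Num.sqrt (\sum_(i < n) v i ^+ 2).

Definition ind (z : R) : R := if 0 <= z then 1 else 0.
Definition relu (z : R) : R := z * ind z.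

Definition net (d m : nat) (a : 'I_m -> R) (W : 'I_m -> 'rV[R]_d) (x : 'rV[R]_d) : R :=
  (Num.sqrt m%:R)^-1 * \sum_(r < m) a r * relu (dotv (W r) x).

Definition grad (d n m : nat) (x : 'I_n -> 'rV[R]_d) (y : 'I_n -> R) (a : 'I_m -> R)
  (W : 'I_m -> 'rV[R]_d) (r : 'I_m) : 'rV[R]_d :=
  (Num.sqrt m%:R)^-1 *: \sum_(i < n)
     (((net a W (x i) - y i) * a r * ind (dotv (W r) (x i))) *: x i).

(* W : nat -> weights is the Polyak-momentum trajectory, with w_{-1} := w_0
   (encoded by truncated subtraction s.-1 at s = 0). *)
Definition momentum_traj (d n m : nat) (x : 'I_n -> 'rV[R]_d) (y : 'I_n -> R)
  (a : 'I_m -> R) (eta beta : R) (W : nat -> 'I_m -> 'rV[R]_d) : Prop :=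
  forall (s : nat) (r : 'I_m),
    W s.+1 r = W s r - eta *: grad x y a (W s) r + beta *: (W s r - W s.-1 r).

Definition uvec (d n m : nat) (x : 'I_n -> 'rV[R]_d) (a : 'I_m -> R)
  (W : 'I_m -> 'rV[R]_d) : 'I_n -> R := fun i => net a W (x i).

Definition Hmat (d n m : nat) (x : 'I_n -> 'rV[R]_d) (W : 'I_m -> 'rV[R]_d)
  (i j : 'I_n) : R :=
  (m%:R)^-1 * \sum_(r < m) dotv (x i) (x j) *
     (if (0 <= dotv (W r) (x i)) && (0 <= dotv (W r) (x j)) then 1 else 0).

Definition event_A (d n m : nat) (x : 'I_n -> 'rV[R]_d) (W0 : 'I_m -> 'rV[R]_d)
  (Rad : R) (i : 'I_n) (r : 'I_m) : Prop :=
  exists w : 'rV[R]_d, normv (w - W0 r) <= Rad /\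
    (0 <= dotv (x i) (W0 r)) != (0 <= dotv (x i) w).

Definition Sperp (d n m : nat) (x : 'I_n -> 'rV[R]_d) (W0 : 'I_m -> 'rV[R]_d)
  (Rad : R) (i : 'I_n) : {set 'I_m} :=
  [set r : 'I_m | `[< event_A x W0 Rad i r >] ].

End Defs.

(* Main.v *)
Require Import Defs.
From HB Require Import structures.
From mathcomp Require Import all_boot all_order all_algebra.
From mathcomp Require Import boolp reals.
From mathcomp Require Import ring lra zify.
Import Order.TTheory GRing.Theory Num.Theory.
Local Open Scope ring_scope.

Lemma sum_prod (R : realType) (d : nat) (F G : 'I_d -> R) :
  \sum_i \sum_j F i * G j = (\sum_i F i) * (\sum_j G j).
Proof. rewrite big_distrl /=; apply: eq_bigr => i _; by rewrite big_distrr. Qed.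

Lemma cs_sq (R : realType) (d : nat) (u v : 'I_d -> R) :
  (\sum_k u k * v k) ^+ 2 <= (\sum_k u k ^+ 2) * (\sum_k v k ^+ 2).
Proof.
have H : 0 <= \sum_i \sum_j (u i * v j - u j * v i) ^+ 2.
  by apply: sumr_ge0 => i _; apply: sumr_ge0 => j _; exact: sqr_ge0.
have E : \sum_i \sum_j (u i * v j - u j * v i) ^+ 2 =
   2 * ((\sum_k u k ^+ 2) * (\sum_k v k ^+ 2) - (\sum_k u k * v k) ^+ 2).
  have E1 : forall i j, (u i * v j - u j * v i) ^+ 2 =
     u i ^+2 * v j ^+ 2 + v i ^+ 2 * u j ^+ 2 - (2 * (u i * v i)) * (u j * v j).
    by move=> i j; ring.
  under eq_bigr do under eq_bigr do rewrite E1.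
  under eq_bigr do rewrite sumrB big_split /=.
  rewrite sumrB big_split /= !sum_prod -mulr_sumr.
  set A := \sum_k _; set B := \sum_k _; set C := \sum_k _. ring.
rewrite E in H; rewrite -subr_ge0; nra.
Qed.

Lemma cs_abs (R : realType) (d : nat) (u v : 'I_d -> R) :
  `|\sum_k u k * v k| <= Num.sqrt (\sum_k u k ^+ 2) * Num.sqrt (\sum_k v k ^+ 2).
Proof.
rewrite -sqrtrM; last by apply: sumr_ge0 => k _; exact: sqr_ge0.
rewrite -sqrtr_sqr; rewrite ler_sqrt; first exact: cs_sq.
apply: mulr_ge0; by apply: sumr_ge0 => k _; exact: sqr_ge0.
Qed.

Section Dot.
Context {R : realType}.
Implicit Types (d : nat).

Lemma dotvC d (u v : 'rV[R]_d) : dotv u v = dotv v u.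
Proof. by rewrite /dotv; apply: eq_bigr => k _; rewrite mulrC. Qed.

Lemma dotvBl d (u v w : 'rV[R]_d) : dotv (u - v) w = dotv u w - dotv v w.
Proof. by rewrite /dotv -sumrB; apply: eq_bigr => k _; rewrite !mxE mulrBl. Qed.

Lemma dotvDl d (u v w : 'rV[R]_d) : dotv (u + v) w = dotv u w + dotv v w.
Proof. by rewrite /dotv -big_split; apply: eq_bigr => k _; rewrite !mxE mulrDl. Qed.

Lemma dotvZl d (k : R) (u w : 'rV[R]_d) : dotv (k *: u) w = k * dotv u w.
Proof. by rewrite /dotv mulr_sumr; apply: eq_bigr => l _; rewrite !mxE mulrA. Qed.

Lemma dotv_suml d n (F : 'I_n -> 'rV[R]_d) w :
  dotv (\sum_j F j) w = \sum_j dotv (F j) w.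
Proof.
rewrite /dotv; under eq_bigr do rewrite summxE mulr_suml.
by rewrite exchange_big.
Qed.

Lemma dotv_abs d (u v : 'rV[R]_d) : `|dotv u v| <= normv u * normv v.
Proof.
rewrite /normv /dotv.
exact: (@cs_abs R _ (fun k => u 0 k) (fun k => v 0 k)).
Qed.

Lemma sum_abs_le n (v : 'I_n -> R) :
  \sum_j `|v j| <= Num.sqrt n%:R * normf v.
Proof.
have := @cs_abs R _ (fun _ => 1) (fun j => `|v j|).
rewrite /normf.
under eq_bigr do rewrite mul1r.
under [X in _ <= Num.sqrt X * _]eq_bigr do rewrite expr1n.
under [X in _ <= _ * Num.sqrt X]eq_bigr do rewrite real_normK ?num_real //.
rewrite sumr_const card_ord ger0_norm; last by apply: sumr_ge0.
by rewrite [n%:R]/(_ *+ _).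
Qed.

Lemma relu_lip (p q : R) : `|relu p - relu q| <= `|p - q|.
Proof.
rewrite /relu /ind.
case: (lerP 0 p) => hp; case: (lerP 0 q) => hq; rewrite ?mulr1 ?mulr0.
- by [].
- rewrite subr0 !ger0_norm //; lra.
- rewrite sub0r normrN ger0_norm // ltr0_norm; lra.
- by rewrite subr0 normr0.
Qed.

Lemma relu_same (p q : R) : (0 <= p) = (0 <= q) -> relu p - relu q = (p - q) * ind q.
Proof. by rewrite /relu /ind => ->; case: ifP => _; ring. Qed.
Lemma normv_ge0 d (u : 'rV[R]_d) : 0 <= normv u.
Proof. exact: sqrtr_ge0. Qed.
End Dot.
Arguments dotvC {R d} u v.

Lemma geom_shift (R : realType) (beta : R) (B : nat -> R) (k : nat) :
  \sum_(s < k.+1) beta ^+ (k - s) * B s =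
  B k + beta * \sum_(s < k) beta ^+ (k.-1 - s) * B s.
Proof.
rewrite big_ord_recr /= subnn expr0 mul1r addrC; congr (_ + _).
rewrite mulr_sumr; apply: eq_bigr => s _.
have -> : (k - s = (k.-1 - s).+1)%N by have := ltn_ord s; lia.
by rewrite exprS mulrA.
Qed.

Lemma rec_bound (R : realType) (E B : nat -> R) (eta beta : R) :
  0 <= beta -> E 0%N = 0 ->
  (forall k, `|E k.+1| <= eta * B k + beta * `|E k|) ->
  forall k, `|E k| <= eta * \sum_(s < k) beta ^+ (k.-1 - s) * B s.
Proof.
move=> hb E0 hE; elim=> [|k IH].
  by rewrite E0 normr0 big_ord0 mulr0.
apply: (le_trans (hE k)); rewrite /= geom_shift mulrDr.
rewrite lerD2l mulrCA; exact: ler_wpM2l.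
Qed.

Lemma sum_lin (R : realType) (m : nat) (a A B C : 'I_m -> R) (beta : R) :
  \sum_r a r * ((A r - B r) - beta * (B r - C r)) =
  \sum_r a r * A r - \sum_r a r * B r - beta * (\sum_r a r * B r - \sum_r a r * C r).
Proof.
rewrite -[\sum_r a r * B r - _]sumrB mulr_sumr -!sumrB.
by apply: eq_bigr => r _; ring.
Qed.

Lemma sum_pull (R : realType) (t : nat) (f : nat -> R) (N : nat -> R) (k : R) :
  \sum_(s < t) f s * (k * N s) = k * \sum_(s < t) f s * N s.
Proof. by rewrite mulr_sumr; apply: eq_bigr => s _; ring. Qed.

Theorem lemma3 (R : realType) (d n m : nat)
  (x : 'I_n -> 'rV[R]_d) (y : 'I_n -> R) (a : 'I_m -> R)
  (eta beta Rad : R) (W : nat -> 'I_m -> 'rV[R]_d) (t : nat) :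
  (forall i, normv (x i) <= 1) ->
  (forall r, a r = 1 \/ a r = -1) ->
  0 < eta -> 0 <= beta -> beta <= 1 -> 0 < Rad ->
  momentum_traj x y a eta beta W ->
  (forall (r : 'I_m) (s : nat), (s <= t.+1)%N -> normv (W s r - W 0%N r) <= Rad) ->
  let xi := fun (s : nat) (i : 'I_n) => uvec x a (W s) i - y i in
  let phi := fun i : 'I_n =>
    xi t.+1 i - (1 + beta) * xi t i + beta * xi t.-1 i
    + eta * \sum_(j < n) Hmat x (W t) i j * xi t j in
  forall i : 'I_n,
    `|phi i| <=
      2 * eta * Num.sqrt n%:R * (#|Sperp x (W 0%N) Rad i|)%:R / m%:R *
      (normf (xi t) + beta * \sum_(s < t) beta ^+ (t.-1 - s) * normf (xi s)).
Proof.
move=> Hx Ha Heta Hb0 Hb1 HRad Htraj HW xi phi i.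
set c : R := (Num.sqrt m%:R)^-1.
have c0 : 0 <= c by rewrite invr_ge0 sqrtr_ge0.
have hcc : c * c = m%:R^-1.
  by rewrite -invfM -expr2 sqr_sqrtr // ler0n.
have ha2 : forall r, a r * a r = 1 by move=> r; case: (Ha r) => ->; ring.
have haa : forall r, `|a r| = 1 by move=> r; case: (Ha r) => ->; rewrite ?normrN normr1.
set z := fun s r => dotv (W s r) (x i).
set g := fun s r => dotv (grad x y a (W s) r) (x i).
set N := fun s => normf (xi s).
have hrec : forall s r, z s.+1 r - z s r = - eta * g s r + beta * (z s r - z s.-1 r).
  move=> s r; rewrite /z /g (Htraj s r) dotvDl dotvBl !dotvZl dotvBl; ring.
have hdot : forall j k, `|dotv (x j) (x k)| <= 1.
  move=> j k; apply: le_trans (@dotv_abs R d (x j) (x k)) _.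
  rewrite -[1](mulr1 1); apply: ler_pM => //; exact: normv_ge0.
have hind : forall p : R, `|ind p| <= 1.
  by move=> p; rewrite /ind; case: ifP; rewrite ?normr1 ?normr0.
have hg : forall s r, `|g s r| <= c * (Num.sqrt n%:R * N s).
  move=> s r; rewrite /g /grad dotvZl dotv_suml.
  under eq_bigr do rewrite dotvZl.
  rewrite normrM ger0_norm // -/c; apply: (ler_wpM2l c0).
  apply: le_trans; first exact: ler_norm_sum.
  apply: le_trans _ (@sum_abs_le R n (xi s)).
  apply: ler_sum => j _; rewrite !normrM haa mulr1.
  rewrite -[X in _ <= X]mulr1 -mulrA; apply: (ler_wpM2l (normr_ge0 _)).
  rewrite -[1](mulr1 1); apply: ler_pM => //.
have hE : forall r k, `|z k r - z k.-1 r| <=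
    eta * \sum_(s < k) beta ^+ (k.-1 - s) * (c * (Num.sqrt n%:R * N s)).
  move=> r; apply: (@rec_bound R (fun k => z k r - z k.-1 r)
    (fun s => c * (Num.sqrt n%:R * N s)) eta beta Hb0).
  - by rewrite /= subrr.
  - move=> k /=; rewrite hrec.
    apply: le_trans; first exact: ler_normD.
    rewrite !normrM normrN (gtr0_norm Heta) (ger0_norm Hb0).
    by rewrite lerD2r; apply: (ler_wpM2l (ltW Heta)).
set cc := fun r j => (if (0 <= z t r) && (0 <= dotv (W t r) (x j)) then 1 else 0 : R).
set T := fun r => c * (a r * ((relu (z t.+1 r) - relu (z t r))
     - beta * (relu (z t r) - relu (z t.-1 r))))
   + eta * (m%:R^-1 * \sum_j dotv (x i) (x j) * cc r j * xi t j).
have Hphi : phi i = \sum_r T r.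
  have HH : \sum_j Hmat x (W t) i j * xi t j =
      \sum_r m%:R^-1 * \sum_j dotv (x i) (x j) * cc r j * xi t j.
    rewrite -mulr_sumr.
    under eq_bigr do rewrite /Hmat -mulrA mulr_suml.
    by rewrite -mulr_sumr exchange_big.
  have HX : forall s, xi s i = c * \sum_r a r * relu (z s r) - y i by [].
  rewrite /phi HH !HX /T big_split /= -!mulr_sumr sum_lin.
  ring.
set Sg := \sum_(s < t) beta ^+ (t.-1 - s) * N s.
set S := Sperp x (W 0%N) Rad i.
set K := 2 * eta * Num.sqrt n%:R * m%:R^-1 * (N t + beta * Sg).
have hT : forall r, `|T r| <= (if r \in S then K else 0).
  move=> r; case: (boolP (r \in S)) => hr.
  - rewrite /T; apply: le_trans; first exact: ler_normD.
    rewrite normrM (ger0_norm c0) normrM haa mul1r normrM (gtr0_norm Heta).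
    have minv0 : 0 <= (m%:R : R)^-1 by rewrite invr_ge0 ler0n.
    rewrite normrM (ger0_norm minv0).
    have hsum : \sum_(s < t) beta ^+ (t.-1 - s) * (c * (Num.sqrt n%:R * N s))
        = c * Num.sqrt n%:R * Sg.
      by rewrite /Sg mulr_sumr; apply: eq_bigr => s _; ring.
    have h1 : `|relu (z t.+1 r) - relu (z t r)| <=
        eta * (c * (Num.sqrt n%:R * N t) + beta * (c * Num.sqrt n%:R * Sg)).
      apply: le_trans; first exact: relu_lip.
      apply: le_trans; first exact: (hE r t.+1).
      rewrite /= (@geom_shift R beta (fun s => c * (Num.sqrt n%:R * N s)) t) /=.
      by rewrite hsum.
    have h2 : `|relu (z t r) - relu (z t.-1 r)| <= eta * (c * Num.sqrt n%:R * Sg).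
      apply: le_trans; first exact: relu_lip.
      apply: le_trans; first exact: (hE r t).
      by rewrite hsum.
    have h3 : `|\sum_j dotv (x i) (x j) * cc r j * xi t j| <= Num.sqrt n%:R * N t.
      apply: le_trans; first exact: ler_norm_sum.
      apply: le_trans _ (@sum_abs_le R n (xi t)).
      apply: ler_sum => j _; rewrite !normrM.
      rewrite -[X in _ <= X]mul1r; apply: ler_wpM2r; first exact: normr_ge0.
      rewrite -[1](mulr1 1); apply: ler_pM => //.
      by rewrite /cc; case: ifP; rewrite ?normr1 ?normr0.
    have hXY : forall X Y : R, `|X - beta * Y| <= `|X| + beta * `|Y|.
      move=> X Y; apply: le_trans; first exact: ler_normB.
      by rewrite normrM (ger0_norm Hb0).
    apply: le_trans.
      apply: lerD.
        apply: (ler_wpM2l c0); apply: le_trans; first exact: hXY.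
        apply: lerD; first exact: h1.
        by apply: (ler_wpM2l Hb0); exact: h2.
      apply: (ler_wpM2l (ltW Heta)); apply: (ler_wpM2l minv0); exact: h3.
    rewrite le_eqVlt; apply/orP; left; apply/eqP; rewrite /K -hcc; ring.
  - have hnA : ~ event_A x (W 0%N) Rad i r.
      by move: hr; rewrite inE => /asboolPn.
    have hs : forall s, (s <= t.+1)%N -> (0 <= z s r) = (0 <= z 0%N r).
      move=> s hst; apply/eqP; apply: contraT => hne; exfalso; apply: hnA.
      exists (W s r); split; first exact: HW.
      by rewrite (dotvC (x i) (W 0%N r)) (dotvC (x i) (W s r)) eq_sym.
    have hs1 : (0 <= z t.+1 r) = (0 <= z t r) by rewrite hs // hs.
    have hs2 : (0 <= z t r) = (0 <= z t.-1 r).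
      by rewrite hs // [RHS]hs //; lia.
    have hI : ind (z t.-1 r) = ind (z t r) by rewrite /ind hs2.
    rewrite /T (@relu_same R _ _ hs1) (@relu_same R _ _ hs2) hI.
    set I := ind (z t r).
    have Hxx : (z t.+1 r - z t r) * I - beta * ((z t r - z t.-1 r) * I)
        = (- eta * g t r) * I by rewrite hrec; ring.
    set S' := \sum_j dotv (x i) (x j) * ind (dotv (W t r) (x j)) * xi t j.
    have hg' : g t r = c * (a r * S').
      rewrite /g /grad dotvZl dotv_suml; congr (_ * _); rewrite /S' mulr_sumr.
      by apply: eq_bigr => j _; rewrite dotvZl (dotvC (x j) (x i)) /xi /uvec; ring.
    have hcc' : \sum_j dotv (x i) (x j) * cc r j * xi t j = I * S'.
      rewrite /S' mulr_sumr; apply: eq_bigr => j _.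
      rewrite /cc /I /ind; case: (0 <= z t r); case: (0 <= dotv (W t r) (x j)); rewrite /=; ring.
    rewrite Hxx hg' hcc' -hcc.
    have -> : c * (a r * (- eta * (c * (a r * S')) * I)) + eta * (c * c * (I * S'))
        = eta * (c * c) * I * S' * (1 - a r * a r) by ring.
    by rewrite ha2 subrr mulr0 normr0.
rewrite Hphi; apply: le_trans; first exact: ler_norm_sum.
apply: le_trans; first by apply: ler_sum => r _; exact: hT.
rewrite -big_mkcond /= sumr_const -[_ *+ #|S|]mulr_natr.
rewrite le_eqVlt; apply/orP; left; apply/eqP; rewrite /K /N; ring.
Qed.
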